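(* Let $X$ be the Cantor set, $\alpha$ a minimal homeomorphism of $X$, and $\phi:X\to\operatorname{Isom}(\mathbb{T})$ continuous such that $\alpha\times\phi$ is minimal and not orientation preserving. For any $x_0\in X$, $m\in\mathbb{Z}$ and nonempty clopen $O\subset X$, there exists a clopen set $U\subset O$ such that $1_U$ is equivalent to $mh_\phi$ in $K_1(A_{x_0})$. Moreover, there exists $\sigma\in[[\alpha]]$ such that $\sigma(x)=x$ for all $x\notin U$ and $\sigma_\phi^*(1_U)=-1_U$.
   Context: $\alpha\times\phi:(x,t)\mapsto(\alpha(x),\phi_x(t))$; $o(\phi)(x)=0$ if $\phi_x$ preserves orientation, $1$ otherwise; orientation preserving means $o(\phi)\in\{f-f\circ\alpha^{-1}:f\in C(X,\mathbb{Z}_2)\}$. $\alpha_\phi^*$ is the automorphism of $C(X,\mathbb{Z})$ given by $\alpha_\phi^*(f)(x)=(-1)^{o(\phi)(\alpha^{-1}(x))}f(\alpha^{-1}(x))$. $K_1(A_{x_0})$ is identified with $C(X,\mathbb{Z})/\{f-\alpha_\phi^*(f):f\in C(X,\mathbb{Z}),f(x_0)=0\}$ (where $A_{x_0}$ is the subalgebra of the crossed product generated by $C(X\times\mathbb{T})$ and $uC_0((X\setminus\{x_0\})\times\mathbb{T})$), and ''equivalent in $K_1(A_{x_0})$'' means equal images in this quotient. $h_\phi(x)=1$ if $o(\phi)(\alpha^{-1}(x))=1$, $0$ otherwise. $[[\alpha]]$ (topological full group) is the set of homeomorphisms $\sigma$ of $X$ for which there is a continuous $n:X\to\mathbb{Z}$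 with $\sigma(x)=\alpha^{n(x)}(x)$; for such $\sigma$, $\sigma_\phi^*(f)=\sum_{k\in\mathbb{Z}}(\alpha_\phi^* )^k(f1_{n^{-1}(k)})$ for $f\in C(X,\mathbb{Z})$. *)

(* Defs.v *)
From HB Require Import structures.
From mathcomp Require Import all_boot all_order all_algebra.
From mathcomp Require Import all_classical all_reals all_analysis.
Set Implicit Arguments. Unset Strict Implicit. Unset Printing Implicit Defensive.
Import Order.TTheory GRing.Theory Num.Theory.
Import numFieldNormedType.Exports.
Local Open Scope classical_set_scope.
Local Open Scope ring_scope.

Notation X := cantor_space.

Definition circle (R : realType) : set (R * R) :=
  [set p | p.1 ^+ 2 + p.2 ^+ 2 = 1].
Arguments circle R : clear implicits.

Definition dist2 (R : realType) (p q : R * R) : R :=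
  (p.1 - q.1) ^+ 2 + (p.2 - q.2) ^+ 2.

Definition circle_isom (R : realType) (g : R * R -> R * R) : Prop :=
  [/\ forall p, circle R p -> circle R (g p),
      forall p q, circle R p -> circle R q -> dist2 (g p) (g q) = dist2 p q
    & forall q, circle R q -> exists2 p, circle R p & g p = q].

(** an isometry of the circle preserves orientation iff it is a rotation *)
Definition orient_pres (R : realType) (g : R * R -> R * R) : Prop :=
  exists a b : R, a ^+ 2 + b ^+ 2 = 1 /\
    forall p, circle R p -> g p = (a * p.1 - b * p.2, b * p.1 + a * p.2).

(** o(phi)(x) : false (=0) if phi_x preserves orientation, true (=1) otherwise *)
Definition o_phi (R : realType) (phi : X -> R * R -> R * R) (x : X) : bool :=
  ~~ `[< orient_pres (phi x) >].

Definition homeo (T : topologicalType) (f : T -> T) : Prop :=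
  continuous f /\ exists g : T -> T, [/\ cancel f g, cancel g f & continuous g].

Definition minimal_homeo (f : X -> X) : Prop :=
  homeo f /\ forall A : set X, closed A -> f @` A = A -> A = set0 \/ A = setT.

Definition skew (R : realType) (alpha : X -> X) (phi : X -> R * R -> R * R)
  (z : X * (R * R)) : X * (R * R) := (alpha z.1, phi z.1 z.2).

Definition skew_minimal (R : realType) (alpha : X -> X)
  (phi : X -> R * R -> R * R) : Prop :=
  forall B : set (X * (R * R)), B `<=` setT `*` circle R -> closed B ->
    skew alpha phi @` B = B -> B = set0 \/ B = setT `*` circle R.

(** locally constant functions = continuous functions into a discrete space
    (used for C(X, Z) and C(X, Z_2)) *)
Definition lconst (T : topologicalType) (Y : Type) (f : T -> Y) : Prop :=
  forall x, \forall y \near x, f y = f x.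

(** alpha x phi is orientation preserving:
    o(phi) \in { f - f o alpha^-1 : f \in C(X, Z_2) } (Z_2 = bool, - = xor) *)
Definition orientation_preserving (R : realType) (alphai : X -> X)
  (phi : X -> R * R -> R * R) : Prop :=
  exists f : X -> bool, lconst f /\ forall x, o_phi phi x = f x (+) f (alphai x).

Definition astar (R : realType) (alphai : X -> X) (phi : X -> R * R -> R * R)
  (f : X -> int) (x : X) : int :=
  (-1) ^+ o_phi phi (alphai x) * f (alphai x).

Definition astar_inv (R : realType) (alpha : X -> X) (phi : X -> R * R -> R * R)
  (f : X -> int) (x : X) : int :=
  (-1) ^+ o_phi phi x * f (alpha x).

Definition astar_pow (R : realType) (alpha alphai : X -> X)
  (phi : X -> R * R -> R * R) (k : int) (f : X -> int) : X -> int :=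
  match k with
  | Posz n => iter n (astar alphai phi) f
  | Negz n => iter n.+1 (astar_inv alpha phi) f
  end.

Definition aiter (alpha alphai : X -> X) (k : int) (x : X) : X :=
  match k with
  | Posz n => iter n alpha x
  | Negz n => iter n.+1 alphai x
  end.

Definition in_full_group (alpha alphai : X -> X) (sigma : X -> X)
  (n : X -> int) : Prop :=
  homeo sigma /\ lconst n /\ forall x, sigma x = aiter alpha alphai (n x) x.

(** sigma_phi^*(f) = \sum_k (alpha_phi^* )^k (f 1_{n^{-1}(k)}) (pointwise,
    a finitely supported sum) *)
Definition sigma_star (R : realType) (alpha alphai : X -> X)
  (phi : X -> R * R -> R * R) (n : X -> int) (f : X -> int) (x : X) : int :=
  \sum_(k \in [set: int])
     astar_pow alpha alphai phi k (fun y => f y * (n y == k)%:Z) x.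

Definition ind (U : set X) (x : X) : int := `[< U x >]%:Z.

Definition h_phi (R : realType) (alphai : X -> X) (phi : X -> R * R -> R * R)
  (x : X) : int := (o_phi phi (alphai x))%:Z.

(** f and g are equal in K_1(A_{x0}) =
    C(X,Z) / { f - alpha_phi^*(f) : f \in C(X,Z), f(x0) = 0 } *)
Definition K1_equiv (R : realType) (alphai : X -> X) (phi : X -> R * R -> R * R)
  (x0 : X) (f g : X -> int) : Prop :=
  exists f' : X -> int, [/\ lconst f', f' x0 = 0 &
    forall x, f x - g x = f' x - astar alphai phi f' x].

(* Main.v *)
Require Import Defs.
From HB Require Import structures.
From mathcomp Require Import all_boot all_order all_algebra.
From mathcomp Require Import all_classical all_reals all_analysis.
From mathcomp Require Import zify ring lra.
Import Order.TTheory GRing.Theory Num.Theory.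
Import numFieldNormedType.Exports.
Local Open Scope classical_set_scope.
Local Open Scope ring_scope.

Lemma lconst_cst (T : topologicalType) (Y : Type) (c : Y) : lconst (fun _ : T => c).
Proof. by move=> x; apply: nearW. Qed.

Lemma lconst2 (T : topologicalType) (A B C : Type) (f : T -> A) (g : T -> B) (h : A -> B -> C) :
  lconst f -> lconst g -> lconst (fun x => h (f x) (g x)).
Proof. by move=> hf hg x; apply: filterS2 (hf x) (hg x) => y -> ->. Qed.

Lemma lconst1 (T : topologicalType) (A C : Type) (f : T -> A) (h : A -> C) :
  lconst f -> lconst (fun x => h (f x)).
Proof. by move=> hf x; apply: filterS (hf x) => y ->. Qed.

Lemma lconst_comp (T S : topologicalType) (A : Type) (f : S -> A) (c : T -> S) :
  lconst f -> continuous c -> lconst (fun x => f (c x)).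
Proof. by move=> hf hc x; exact: (hc x _ (hf (c x))). Qed.

Lemma continuous_iter (T : topologicalType) (f : T -> T) n :
  continuous f -> continuous (iter n f).
Proof.
move=> hf; elim: n => [|n IH] /= x; first exact: cvg_id.
exact: (continuous_comp (IH x) (hf _)).
Qed.

Lemma continuous_lconst_sel (T S : topologicalType) (N : T -> nat) (F : nat -> T -> S) :
  lconst N -> (forall k, continuous (F k)) -> continuous (fun x => F (N x) x).
Proof.
move=> hN hF x.
apply: cvg_trans (hF (N x) x).
apply: near_eq_cvg; apply: filterS (hN x) => y -> //.
Qed.

Lemma clopen_lconst (T : topologicalType) (O : set T) : clopen O -> lconst (fun x => `[< O x >]).
Proof.
case=> oO cO x; have [Ox|nOx] := pselect (O x).
  have : nbhs x O by apply: open_nbhs_nbhs.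
  by apply: filterS => y Oy; rewrite !asboolT.
have : nbhs x (~` O) by apply: open_nbhs_nbhs; split => //; exact: closed_openC.
by apply: filterS => y Oy; rewrite !asboolF.
Qed.

Lemma lconst_clopen (T : topologicalType) (u : T -> bool) : lconst u -> clopen [set x | u x].
Proof.
move=> hu; split.
  rewrite openE => x ux; rewrite /interior.
  by apply: filterS (hu x) => y /= ->.
rewrite -openC openE => x ux; rewrite /interior.
by apply: filterS (hu x) => y /= ->.
Qed.

Lemma lconst_coord (n : nat) : lconst (fun y : X => y n).
Proof.
move=> x; have := @proj_continuous nat (fun _ => bool) n x.
move=> H.
have := H [set x n] (@discrete_set1 bool (x n)).
rewrite /= /proj => H2.
exact: H2.
Qed.
Lemma iter_gf (f g : X -> X) : cancel f g -> forall k n x, (k <= n)%N ->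
  iter k g (iter n f x) = iter (n - k) f x.
Proof.
move=> fK; elim=> [|k IH] n x hk; first by rewrite subn0.
rewrite iterS IH; last by lia.
have -> : (n - k = (n - k.+1).+1)%N by lia.
by rewrite iterS fK.
Qed.

Lemma return_bound (f g : X -> X) : continuous f -> continuous g ->
  cancel f g -> cancel g f ->
  (forall A : set X, closed A -> f @` A = A -> A = set0 \/ A = setT) ->
  forall V : set X, open V -> V !=set0 ->
  exists B : nat, forall x, exists2 k : nat, (0 < k <= B)%N & V (iter k f x).
Proof.
move=> cf cg fK gK hmin V oV [v Vv].
pose C := [set x | forall k, ~ V (iter k f x) /\ ~ V (iter k g x)].
have cC : closed C.
  rewrite -openC openE => x /= nCx.
  have [k hk] : exists k, V (iter k f x) \/ V (iter k g x).
    apply: contrapT => hn; apply: nCx => k; split => hv; apply: hn; exists k; by [left|right].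
  case: hk => hk.
    have := @continuous_iter _ f k cf x; move=> /(_ _ (open_nbhs_nbhs (conj oV hk))) /=.
    move=> H; have H' : nbhs x (iter k f @^-1` V) := H; move: H'; apply: filterS.
    by move=> y /= hy hC; case: (hC k).
  have := @continuous_iter _ g k cg x; move=> /(_ _ (open_nbhs_nbhs (conj oV hk))) /=.
  move=> H; have H' : nbhs x (iter k g @^-1` V) := H; move: H'; apply: filterS.
  by move=> y /= hy hC; case: (hC k).
have fC : f @` C = C.
  apply/seteqP; split.
    move=> _ [x Cx <-] k; split.
      by rewrite -iterSr; case: (Cx k.+1).
    case: k => [|k]; first by case: (Cx 1%N).
    by rewrite iterSr fK; case: (Cx k).
  move=> y Cy; exists (g y); last by rewrite gK.
  move=> k; split.
    case: k => [|k]; first by case: (Cy 1%N).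
    by rewrite iterSr gK; case: (Cy k).
  by rewrite -iterSr; case: (Cy k.+1).
have C0 : C = set0.
  case: (hmin C cC fC) => // CT.
  have : C v by rewrite CT.
  by move=> /(_ 0%N) [].
have cov : [set: X] `<=` \bigcup_(k in [set: nat]) (iter k f @^-1` V `|` iter k g @^-1` V).
  move=> x _.
  have : ~ C x by rewrite C0.
  move=> nCx; apply: contrapT => hn; apply: nCx => k; split => hv; apply: hn; exists k => //; by [left|right].
have := cantor_space_compact; rewrite compact_cover => /(_ nat [set: nat] _ _ cov).
case.
  move=> k _; apply: openU.
    by apply: (@open_comp _ _ (iter k f)) => // y _; apply: continuous_iter.
  by apply: (@open_comp _ _ (iter k g)) => // y _; apply: continuous_iter.
move=> D _ hD.
pose N := (\max_(k <- finmap.enum_fset D) k)%N.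
exists (N.*2.+1) => x.
have [k /= Dk hk] := hD (iter N.+1 f x) I.
have kN : (k <= N)%N by rewrite /N; exact: (@leq_bigmax_seq _ _ xpredT id k).
case: hk => /= hk.
  exists (k + N.+1)%N; first by lia.
  by rewrite iterD.
exists (N.+1 - k)%N; first by lia.
by move: hk; rewrite -iterS (@iter_gf f g fK) //; lia.
Qed.
Arguments lconst2 {T A B C f g} h _ _.
Arguments lconst1 {T A C f} h _.
Arguments lconst_comp {T S A f c} _ _.
Fixpoint fh (p : X -> bool) (f : X -> X) (n : nat) (x : X) : nat :=
  if p x then 0%N else if n is n'.+1 then (fh p f n' (f x)).+1 else 0%N.

Lemma lconst_fh (p : X -> bool) f n : lconst p -> continuous f -> lconst (fh p f n).
Proof.
move=> hp cf; elim: n => [|n IH] /=.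
  exact: (lconst1 (fun a : bool => if a then 0%N else 0%N) hp).
exact: (lconst2 (fun (a : bool) b => if a then 0%N else b.+1) hp (lconst_comp IH cf)).
Qed.

Lemma fh_seg (p : X -> bool) f k : forall x n, (k <= n)%N ->
  (forall j, (j < k)%N -> ~~ p (iter j f x)) -> p (iter k f x) -> fh p f n x = k.
Proof.
elim: k => [|k IH] x n kn hj hk /=; first by case: n kn => [|n] _ /=; rewrite hk.
case: n kn => [|n] // kn /=.
rewrite (negbTE (hj 0%N isT)) (IH (f x) n) //.
- by move=> j jk; rewrite -iterSr; apply: hj.
- by rewrite -iterSr.
Qed.

Lemma first_visit_gen (p : X -> bool) f x B : (exists2 k, (k <= B)%N & p (iter k f x)) ->
  exists k, [/\ (k <= B)%N, forall j, (j < k)%N -> ~~ p (iter j f x) & p (iter k f x)].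
Proof.
move=> hex.
have hex' : exists k, p (iter k f x) by case: hex => k _ h; exists k.
case: (ex_minnP hex') => k hk hmin'.
exists k; split => //.
  by case: hex => k' k'B hk'; apply: leq_trans (hmin' _ hk') k'B.
by move=> j jk; apply/negP => hj; have := hmin' _ hj; rewrite leqNgt jk.
Qed.

Definition retn (p : X -> bool) (f : X -> X) (B : nat) (x : X) : nat :=
  if p x then (fh p f B (f x)).+1 else 0%N.

Lemma lconst_retn p f B : lconst p -> continuous f -> lconst (retn p f B).
Proof.
move=> hp cf.
exact: (lconst2 (fun (a : bool) b => if a then b.+1 else 0%N) hp (lconst_comp (lconst_fh _ _ B hp cf) cf)).
Qed.

Lemma retn_props (p : X -> bool) f B :
  (forall x, p x -> exists2 k, (0 < k <= B)%N & p (iter k f x)) ->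
  forall x, p x -> [/\ (0 < retn p f B x <= B)%N, p (iter (retn p f B x) f x) &
     forall j, (0 < j < retn p f B x)%N -> ~~ p (iter j f x)].
Proof.
move=> hB x px; rewrite /retn px.
have [k kB hk] := hB x px.
have [k0 [k0B hj hk0]] : exists k0, [/\ (k0 <= B.-1)%N, forall j, (j < k0)%N -> ~~ p (iter j f (f x))
   & p (iter k0 f (f x))].
  apply: first_visit_gen; exists k.-1; first by lia.
  by rewrite -iterSr prednK //; lia.
rewrite (@fh_seg p f k0 (f x) B _ hj hk0); last by lia.
split; first by lia.
  by rewrite iterSr.
move=> j /andP [j0 jk]; have -> : j = j.-1.+1 by lia.
rewrite iterSr; apply: hj; lia.
Qed.

Lemma retn0 p f B x : ~~ p x -> retn p f B x = 0%N.
Proof. by rewrite /retn => /negbTE ->. Qed.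

Lemma retn_cancel (p : X -> bool) f g Bf Bg : cancel f g ->
  (forall x, p x -> exists2 k, (0 < k <= Bf)%N & p (iter k f x)) ->
  (forall x, p x -> exists2 k, (0 < k <= Bg)%N & p (iter k g x)) ->
  forall x, iter (retn p g Bg (iter (retn p f Bf x) f x)) g (iter (retn p f Bf x) f x) = x.
Proof.
move=> fK hBf hBg x.
case px : (p x); last by rewrite !retn0 ?px.
have [/andP [k0 kB] hk hj] := @retn_props p f Bf hBf x px.
set k := retn p f Bf x in k0 kB hk hj *.
set y := iter k f x.
have [/andP [l0 lB] hl hlj] := @retn_props p g Bg hBg _ hk.
set l := retn p g Bg y in l0 lB hl hlj *.
have lk : l = k.
  apply/eqP; rewrite eqn_leq; apply/andP; split.
    rewrite leqNgt; apply/negP => kl.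
    have := hlj k; rewrite k0 kl => /(_ isT).
    by rewrite /y (@iter_gf f g fK) // subnn /= px.
  rewrite leqNgt; apply/negP => lk.
  have hkl : (0 < k - l < k)%N by lia.
  have := hj (k - l)%N hkl => /negP; apply.
  by move: hl; rewrite /y (@iter_gf f g fK) //; lia.
by rewrite lk /y (@iter_gf f g fK) // subnn.
Qed.
Lemma sep_pts (y : X) (q : nat -> X) (J : nat) : (forall j, (j < J)%N -> q j <> y) ->
  exists v : X -> bool, [/\ lconst v, v y & forall j, (j < J)%N -> ~~ v (q j)].
Proof.
elim: J => [|J IH] hq.
  by exists (fun _ => true); split => //; exact: lconst_cst.
have [v [lv vy hv]] := IH (fun j jJ => hq j (ltnW jJ)).
have [n hn] : exists n, q J n != y n.
  apply: contrapT => hn; apply: (hq J (ltnSn J)); apply: funext => n.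
  by apply/eqP; apply: contrapT => hne; apply: hn; exists n; apply/negP.
exists (fun y' => v y' && (y' n == y n)); split.
- exact: (lconst2 (fun a (b : bool) => a && (b == y n)) lv (lconst_coord n)).
- by rewrite vy eqxx.
- move=> j; rewrite ltnS leq_eqVlt => /orP [/eqP -> | jJ]; first by rewrite (negbTE hn) andbF.
  by rewrite (negbTE (hv j jJ)).
Qed.
Arguments lconst_clopen {T u} _.
Arguments clopen_lconst {T O} _.
Arguments return_bound {f g} _ _ _ _ _ {V} _ _.
Arguments retn_props {p f B} _ {x} _.
Arguments retn_cancel {p f g Bf Bg} _ _ _ x.

Lemma isom_t (R : realType) (g : R * R -> R * R) : circle_isom g ->
  ((g (1,0)).1 * (g (0,1)).2 - (g (1,0)).2 * (g (0,1)).1 = 1 \/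
   (g (1,0)).1 * (g (0,1)).2 - (g (1,0)).2 * (g (0,1)).1 = -1) /\
  (orient_pres g <-> (g (1,0)).1 * (g (0,1)).2 - (g (1,0)).2 * (g (0,1)).1 = 1).
Proof.
case=> hc hd _.
have c10 : circle R (1,0) by rewrite /circle /= expr0n /= addr0 expr1n.
have c01 : circle R (0,1) by rewrite /circle /= expr0n /= add0r expr1n.
have ca := hc _ c10; have cb := hc _ c01; have dab := hd _ _ c10 c01.
move: ca cb dab; rewrite /circle /dist2 /=.
case ea : (g (1,0)) => [a1 a2]; case eb : (g (0,1)) => [b1 b2] /= ca cb dab.
have ip : a1 * b1 + a2 * b2 = 0 by move: dab; rewrite !subr0 !sub0r; nra.
have t2 : (a1 * b2 - a2 * b1) ^+ 2 = 1 by nra.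
split.
  have : (a1 * b2 - a2 * b1 - 1) * (a1 * b2 - a2 * b1 + 1) = 0 by rewrite -subr_sqr t2 expr1n subrr.
  by move=> /eqP; rewrite mulf_eq0 => /orP [] /eqP h; [left | right]; lra.
split.
  case=> a [b [hab hg]].
  move: (hg _ c10) (hg _ c01); rewrite ea eb => -[-> ->] [-> ->].
  nra.
move=> ht.
have s0 : (b1 + a2) ^+ 2 + (b2 - a1) ^+ 2 = 0 by nra.
move: s0 => /eqP; rewrite paddr_eq0 ?sqr_ge0 // => /andP [].
rewrite !sqrf_eq0 => /eqP hb1 /eqP hb2.
have {}hb1 : b1 = - a2 by lra.
have {}hb2 : b2 = a1 by lra.
exists a1, a2; split => // p cp.
have cq := hc _ cp; have d1 := hd _ _ cp c10; have d2 := hd _ _ cp c01.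
move: cq d1 d2; rewrite /circle /dist2 ea eb /=.
move: cp; rewrite /circle; case: p => p1 p2 /= cp.
case: (g (p1, p2)) => q1 q2 /= cq d1 d2.
rewrite hb1 hb2 in d2.
have e1 : q1 * a1 + q2 * a2 = p1 by nra.
have e2 : - q1 * a2 + q2 * a1 = p2 by nra.
congr (_, _); rewrite -e1 -e2 -[LHS]mulr1 -ca; ring.
Qed.

Lemma o_lconst (R : realType) (phi : X -> R * R -> R * R) :
  (forall x, circle_isom (phi x)) ->
  {within [set: X] `*` circle R, continuous (fun z : X * (R * R) => phi z.1 z.2)} ->
  lconst (o_phi phi).
Proof.
move=> hi hc.
have cp : forall p, circle R p -> continuous (fun x => phi x p).
  move=> p cpp x.
  have hc' := (subspace_continuousP _ _).1 hc (x, p) (conj I cpp).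
  have hpair : (fun y => (y, p)) @ nbhs x --> within ([set: X] `*` circle R) (nbhs (x, p)).
    move=> W /= hW.
    have hp : (fun y => (y, p)) @ nbhs x --> (x, p).
      exact: (cvg_pair (@cvg_id _ (nbhs x)) (cvg_cst p)).
    have H : nbhs x (fun y => ([set: X] `*` circle R) (y, p) -> W (y, p)) := hp _ hW.
    change (nbhs x (fun y => W (y, p))); move: H; apply: filterS => y hy.
    exact: hy (conj I cpp).
  exact: (cvg_comp _ _ hpair hc').
have c10 : circle R (1,0) by rewrite /circle /= expr0n /= addr0 expr1n.
have c01 : circle R (0,1) by rewrite /circle /= expr0n /= add0r expr1n.
pose t x := (phi x (1,0)).1 * (phi x (0,1)).2 - (phi x (1,0)).2 * (phi x (0,1)).1.
have fstc : forall (f : X -> R * R) x, f @ nbhs x --> f x -> (fun y => (f y).1) @ nbhs x --> (f x).1.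
  move=> f x hf; exact: (cvg_comp _ _ hf cvg_fst).
have sndc : forall (f : X -> R * R) x, f @ nbhs x --> f x -> (fun y => (f y).2) @ nbhs x --> (f x).2.
  move=> f x hf; exact: (cvg_comp _ _ hf cvg_snd).
have ct : forall x, t @ nbhs x --> t x.
  move=> x; apply: cvgB; apply: cvgM.
  - exact: fstc (cp _ c10 x).
  - exact: sndc (cp _ c01 x).
  - exact: sndc (cp _ c10 x).
  - exact: fstc (cp _ c01 x).
have tE : forall x, o_phi phi x = (t x != 1).
  move=> x; rewrite /o_phi; have [_ e] := isom_t _ _ (hi x).
  congr (~~ _); apply/idP/idP => [/asboolP/e/eqP // | /eqP/e/asboolP //].
move=> x; have := ct x; move=> /cvgrPdist_lt /(_ 1 ltr01).
apply: filterS => y hy; rewrite !tE.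
have tpm z : t z = 1 \/ t z = -1 := (isom_t _ _ (hi z)).1.
move: hy; rewrite ltr_norml => /andP [h1 h2].
case: (tpm x) => hx; case: (tpm y) => hy'; rewrite hx hy' in h1 h2 *; try lra.
Qed.
Section Dyn.
Variables (alpha alphai : X -> X) (o : X -> bool).
Hypothesis aK : cancel alpha alphai.
Hypothesis aiK : cancel alphai alpha.
Hypothesis ca : continuous alpha.
Hypothesis cai : continuous alphai.
Hypothesis hmin : forall A : set X, closed A -> alpha @` A = A -> A = set0 \/ A = setT.
Hypothesis lo : lconst o.

Fixpoint kb (v : X -> bool) (n : nat) (x : X) : bool :=
  if v x then false else if n is n'.+1 then o (alphai x) (+) kb v n' (alphai x) else false.

Fixpoint xs (x : X) (j : nat) : bool :=
  if j is j'.+1 then xs x j' (+) o (iter j alphai x) else false.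

Fixpoint fxs (y : X) (j : nat) : bool :=
  if j is j'.+1 then fxs y j' (+) o (iter j' alpha y) else false.

Lemma lconst_kb (v : X -> bool) n : lconst v -> lconst (kb v n).
Proof.
move=> hv; elim: n => [|n IH] /=.
  exact: (lconst1 (fun a : bool => if a then false else false) hv).
exact: (lconst2 (fun a b => if a then false else b) hv
  (lconst2 addb (lconst_comp lo cai) (lconst_comp IH cai))).
Qed.

Lemma xs_shift x j : xs x j.+1 = o (alphai x) (+) xs (alphai x) j.
Proof.
elim: j => [|j IH] /=; first by rewrite addbF.
move: IH => /= ->; by rewrite -iterSr addbA.
Qed.

Lemma xs_add x a b : xs x (a + b) = xs x a (+) xs (iter a alphai x) b.
Proof.
elim: b => [|b IH] /=; first by rewrite addn0 addbF.
by rewrite addnS /= IH -iterD addnC addbA.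
Qed.

Lemma kb_seg (v : X -> bool) k : forall x n, (k <= n)%N -> (forall j, (j < k)%N -> ~~ v (iter j alphai x)) ->
  v (iter k alphai x) -> kb v n x = xs x k.
Proof.
elim: k => [|k IH] x n kn hj hk /=; first by case: n kn => [|n] _ /=; rewrite hk.
case: n kn => [|n] // kn /=.
rewrite (negbTE (hj 0%N isT)) (IH (alphai x) n) //.
- by rewrite -xs_shift.
- by move=> j jk; rewrite -iterSr; apply: hj.
- by rewrite -iterSr.
Qed.

Lemma first_visit (v : X -> bool) x B : (exists2 k, (k <= B)%N & v (iter k alphai x)) ->
  exists k, [/\ (k <= B)%N, forall j, (j < k)%N -> ~~ v (iter j alphai x) & v (iter k alphai x)].
Proof.
move=> hex.
have hex' : exists k, v (iter k alphai x) by case: hex => k _ h; exists k.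
case: (ex_minnP hex') => k hk hmin'.
exists k; split => //.
  by case: hex => k' k'B hk'; apply: leq_trans (hmin' _ hk') k'B.
by move=> j jk; apply/negP => hj; have := hmin' _ hj; rewrite leqNgt jk.
Qed.

Lemma kb_fuel (v : X -> bool) n x : (exists2 k, (k <= n)%N & v (iter k alphai x)) -> kb v n x = kb v n.+1 x.
Proof.
move=> /first_visit [k [kn hj hk]].
have kn1 : (k <= n.+1)%N by lia.
by rewrite (kb_seg _ _ _ _ kn hj hk) (kb_seg _ _ _ _ kn1 hj hk).
Qed.

Lemma K_rec (v : X -> bool) B : (forall x, exists2 k, (k <= B)%N & v (iter k alphai x)) ->
  forall y, kb v B.+1 (alpha y) = if v (alpha y) then false else o y (+) kb v B.+1 y.
Proof.
move=> hB y /=; rewrite aK; case: (v (alpha y)) => //.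
by rewrite kb_fuel.
Qed.


Definition sig_of (ns : X -> nat) x := iter (ns x) alpha x.
Definition tau_of (nt : X -> nat) x := iter (nt x) alphai x.

Set Implicit Arguments.
Record good (x0 : X) (c : int) (u : X -> bool) (g : X -> int) (ns nt : X -> nat) : Prop := Good {
  gu : lconst u; gg : lconst g; gns : lconst ns; gnt : lconst nt; gx0 : g x0 = 0;
  gK1 : forall x, (u x)%:Z - c * (o (alphai x))%:Z = g x - (-1) ^+ o (alphai x) * g (alphai x);
  gst : forall x, sig_of ns (tau_of nt x) = x;
  gts : forall x, tau_of nt (sig_of ns x) = x;
  gout : forall x, ~~ u x -> ns x = 0%N /\ nt x = 0%N;
  gin : forall x, u x -> [/\ u (sig_of ns x), u (tau_of nt x) & fxs x (ns x)] }.
Unset Implicit Arguments.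

Lemma good0 x0 : good x0 0 (fun _ => false) (fun _ => 0) (fun _ => 0%N) (fun _ => 0%N).
Proof.
split => //; try exact: lconst_cst.
by move=> x; rewrite mul0r subr0 mulr0 subr0.
Qed.

Lemma good_add x0 c1 u1 g1 ns1 nt1 c2 u2 g2 ns2 nt2 :
  good x0 c1 u1 g1 ns1 nt1 -> good x0 c2 u2 g2 ns2 nt2 -> (forall x, ~~ (u1 x && u2 x)) ->
  good x0 (c1 + c2) (fun x => u1 x || u2 x) (fun x => g1 x + g2 x)
    (fun x => ns1 x + ns2 x)%N (fun x => nt1 x + nt2 x)%N.
Proof.
move=> G1 G2 dj.
have sig1 x : u1 x -> sig_of (fun x => ns1 x + ns2 x)%N x = sig_of ns1 x.
  move=> h; rewrite /sig_of /=; have /(gout G2) [-> _] : ~~ u2 x by move: (dj x); rewrite h.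
  by rewrite addn0.
have sig2 x : u2 x -> sig_of (fun x => ns1 x + ns2 x)%N x = sig_of ns2 x.
  move=> h; rewrite /sig_of /=; have /(gout G1) [-> _] : ~~ u1 x by move: (dj x); rewrite h andbT.
  by rewrite add0n.
have tau1 x : u1 x -> tau_of (fun x => nt1 x + nt2 x)%N x = tau_of nt1 x.
  move=> h; rewrite /tau_of /=; have /(gout G2) [_ ->] : ~~ u2 x by move: (dj x); rewrite h.
  by rewrite addn0.
have tau2 x : u2 x -> tau_of (fun x => nt1 x + nt2 x)%N x = tau_of nt2 x.
  move=> h; rewrite /tau_of /=; have /(gout G1) [_ ->] : ~~ u1 x by move: (dj x); rewrite h andbT.
  by rewrite add0n.
have sig0 x : ~~ u1 x -> ~~ u2 x -> sig_of (fun x => ns1 x + ns2 x)%N x = x.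
  by rewrite /sig_of /= => /(gout G1) [-> _] /(gout G2) [-> _].
have tau0 x : ~~ u1 x -> ~~ u2 x -> tau_of (fun x => nt1 x + nt2 x)%N x = x.
  by rewrite /tau_of /= => /(gout G1) [_ ->] /(gout G2) [_ ->].
split.
- exact: (lconst2 orb (gu G1) (gu G2)).
- exact: (lconst2 +%R (gg G1) (gg G2)).
- exact: (lconst2 addn (gns G1) (gns G2)).
- exact: (lconst2 addn (gnt G1) (gnt G2)).
- by rewrite (gx0 G1) (gx0 G2) addr0.
- move=> x; have h1 := gK1 G1 x; have h2 := gK1 G2 x.
  have -> : ((u1 x || u2 x))%:Z = (u1 x)%:Z + (u2 x)%:Z.
    by have := dj x; case: (u1 x); case: (u2 x).
  by rewrite mulrDl opprD addrACA h1 h2 mulrDr opprD addrACA.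
- move=> x; case h1 : (u1 x).
    have [_ ht _] := gin G1 _ h1; rewrite (tau1 _ h1) (sig1 _ ht); exact: (gst G1).
  case h2 : (u2 x).
    have [_ ht _] := gin G2 _ h2; rewrite (tau2 _ h2) (sig2 _ ht); exact: (gst G2).
  by rewrite (tau0 x) ?h1 ?h2 // (sig0 x) ?h1 ?h2.
- move=> x; case h1 : (u1 x).
    have [hs _ _] := gin G1 _ h1; rewrite (sig1 _ h1) (tau1 _ hs); exact: (gts G1).
  case h2 : (u2 x).
    have [hs _ _] := gin G2 _ h2; rewrite (sig2 _ h2) (tau2 _ hs); exact: (gts G2).
  by rewrite (sig0 x) ?h1 ?h2 // (tau0 x) ?h1 ?h2.
- move=> x /norP [/(gout G1) [-> ->] /(gout G2) [-> ->]] //.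
- move=> x /orP [] h.
    have [hs ht hf] := gin G1 _ h.
    have /(gout G2) [e2 _] : ~~ u2 x by move: (dj x); rewrite h.
    split; first by rewrite (sig1 _ h) /= hs.
      by rewrite (tau1 _ h) /= ht.
    by rewrite /= e2 addn0.
  have [hs ht hf] := gin G2 _ h.
  have /(gout G1) [e1 _] : ~~ u1 x by move: (dj x); rewrite h andbT.
  split; first by rewrite (sig2 _ h) /= hs orbT.
    by rewrite (tau2 _ h) /= ht orbT.
  by rewrite /= e1 add0n.
Qed.

Lemma hmin_i : forall A : set X, closed A -> alphai @` A = A -> A = set0 \/ A = setT.
Proof.
move=> A cA hA; apply: hmin => //; apply/seteqP; split.
  move=> _ [x Ax <-]; move: Ax; rewrite -{1}hA => -[y Ay <-]; by rewrite aiK.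
by move=> y Ay; exists (alphai y); [rewrite -hA; exists y | rewrite aiK].
Qed.

Lemma bound_a (p : X -> bool) : lconst p ->
  exists B, forall x, p x -> exists2 k, (0 < k <= B)%N & p (iter k alpha x).
Proof.
move=> hp; have [[z pz]|nz] := pselect (exists z, p z); last first.
  by exists 0%N => x px; exfalso; apply: nz; exists x.
have [oP _] := lconst_clopen hp.
have [B hB] := return_bound ca cai aK aiK hmin oP (ex_intro _ z pz).
by exists B => x _; apply: hB.
Qed.

Lemma bound_ai (p : X -> bool) : lconst p ->
  exists B, forall x, p x -> exists2 k, (0 < k <= B)%N & p (iter k alphai x).
Proof.
move=> hp; have [[z pz]|nz] := pselect (exists z, p z); last first.
  by exists 0%N => x px; exfalso; apply: nz; exists x.
have [oP _] := lconst_clopen hp.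
have [B hB] := return_bound cai ca aiK aK hmin_i oP (ex_intro _ z pz).
by exists B => x _; apply: hB.
Qed.

Lemma bound_ai_all (p : X -> bool) : lconst p -> (exists z, p z) ->
  exists B, forall x, exists2 k, (k <= B)%N & p (iter k alphai x).
Proof.
move=> hp [z pz]; have [oP _] := lconst_clopen hp.
have [B hB] := return_bound cai ca aiK aK hmin_i oP (ex_intro _ z pz).
exists B => x; have [k /andP [_ kB] hk] := hB x; by exists k.
Qed.

Lemma single x0 (v : X -> bool) (d : bool) : lconst v ->
  (exists J, [/\ forall j, (j < J)%N -> ~~ v (iter j alphai x0), v (iter J alphai x0) & xs x0 J = d]) ->
  exists u g ns nt, good x0 ((-1) ^+ d) u g ns nt /\ (forall x, u x -> v x).
Proof.
move=> hv [J [hJ vJ xJ]].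
have [B hB] := bound_ai_all _ hv (ex_intro (fun z => v z) _ vJ).
pose K := kb v B.+1.
have hK y : K (alpha y) = if v (alpha y) then false else o y (+) K y := K_rec _ _ hB y.
pose u x := v x && (o (alphai x) (+) K (alphai x)).
have lK : lconst K by apply: lconst_kb.
have lu : lconst u.
  exact: (lconst2 andb hv (lconst2 addb (lconst_comp lo cai) (lconst_comp lK cai))).
have Kst y : ~~ u (alpha y) -> K (alpha y) = o y (+) K y.
  rewrite /u aK hK; by case: (v (alpha y)) => //= /negbTE ->.
have Ku y : u (alpha y) -> o y (+) K y.
  by rewrite /u aK => /andP [].
have [Bf hBf] := bound_a _ lu.
have [Bb hBb] := bound_ai _ lu.
pose g x : int := if K x == d then 0 else - (-1) ^+ d.
exists u, g, (retn u alpha Bf), (retn u alphai Bb); split; last by move=> x /andP [].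
split.
- exact: lu.
- exact: (lconst1 (fun b => if b == d then 0 else - (-1) ^+ d) lK).
- exact: lconst_retn.
- exact: lconst_retn.
- rewrite /g /K.
  have JB : (J <= B.+1)%N.
    have [k kB hk] := hB x0; rewrite leqNgt; apply/negP => BJ.
    by have := hJ k (leq_ltn_trans kB (ltnW BJ)); rewrite hk.
  by rewrite (kb_seg _ _ _ _ JB hJ vJ) xJ eqxx.
- move=> x; have e := hK (alphai x); rewrite aiK in e.
  rewrite /u /g e.
  case: (v x); case: (o (alphai x)); case: (K (alphai x)); case: (d) => //=.
- move=> x; exact: (retn_cancel aiK hBb hBf x).
- move=> x; exact: (retn_cancel aK hBf hBb x).
- by move=> x nu; rewrite !retn0.
- move=> x ux.
  have [/andP [k0 kB] hk hj] := retn_props hBf ux.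
  have [_ hk' _] := retn_props hBb ux.
  split => //.
  move: (retn u alpha Bf x) k0 kB hk hj => k k0 kB hk hj.
  have claim : forall j, (j < k)%N -> K (iter j alpha x) = fxs x j.
    elim=> [|j IH] jk.
      by move: ux; rewrite /u /K /=; case: (v x).
    rewrite iterS Kst; first by rewrite (IH (ltnW jk)) addbC.
    by rewrite -iterS; apply: hj; rewrite jk.
  case: k k0 kB hk hj claim => // k _ _ hk _ claim.
  by move: hk; rewrite iterS => /Ku; rewrite claim // addbC.
Qed.

Lemma aper z p : (0 < p)%N -> iter p alphai z <> z.
Proof.
move=> p0 hz.
pose F := [set y | exists2 j, (j < p)%N & y = iter j alphai z].
have cF : closed F.
  rewrite -openC openE => y nFy.
  have [v [lv vy hv]] := @sep_pts y (fun j => iter j alphai z) p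
    (fun j jp e => nFy (ex_intro2 _ _ j jp (esym e))).
  change (nbhs y (~` F)).
  move: (lv y); apply: filterS => y' e [j jp ej].
  by have := hv j jp; rewrite -ej e vy.
have fF : alphai @` F = F.
  apply/seteqP; split.
    move=> _ [y [j jp ->] <-].
    case: (ltnP j.+1 p) => h; first by exists j.+1 => //; rewrite iterS.
    exists 0%N => //; have -> : j = p.-1 by lia.
    by rewrite -iterS prednK // hz.
  move=> y [j jp ->]; case: j jp => [|j] jp.
    exists (iter p.-1 alphai z); first by exists p.-1 => //; lia.
    by rewrite -iterS prednK.
  by exists (iter j alphai z); [exists j => //; lia | rewrite iterS].
have FT : F = setT.
  case: (hmin_i _ cF fF) => // F0.
  have Fz : F z by exists 0%N.
  by rewrite F0 in Fz.
pose e (i : 'I_p.+1) : X := fun n => n == i.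
have he : forall i : 'I_p.+1, exists j : 'I_p, e i = iter j alphai z.
  move=> i; have : F (e i) by rewrite FT.
  by move=> [j jp ->]; exists (Ordinal jp).
have [phi hphi] := choice he.
have inj : injective phi.
  move=> i i' hii; have : e i = e i' by rewrite hphi hii -hphi.
  move=> /(congr1 (fun f : X => f i)); rewrite /e eqxx => /esym /eqP h.
  by apply: val_inj; rewrite /= h.
by have := leq_card phi inj; rewrite !card_ord ltnn.
Qed.

Lemma iter_ai_inj x a b : iter a alphai x = iter b alphai x -> a = b.
Proof.
wlog ab : a b / (a <= b)%N.
  by move=> H e; case: (leqP a b) => h; [exact: H | apply/esym/H => //; lia].
move=> e; apply/eqP; rewrite eqn_leq ab /= leqNgt; apply/negP => h.
apply: (@aper (iter a alphai x) (b - a)%N); first by lia.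
by rewrite -iterD subnK // -e.
Qed.

Hypothesis nop : ~ (exists f : X -> bool, lconst f /\ forall x, o x = f x (+) f (alphai x)).

Lemma inf_visits x0 (w : X -> bool) (d : bool) : lconst w -> (exists z, w z) ->
  forall N, exists J, [/\ (N <= J)%N, w (iter J alphai x0) & xs x0 J = d].
Proof.
move=> hw wz N; apply: contrapT => hn.
have H : forall J, (N <= J)%N -> w (iter J alphai x0) -> xs x0 J = ~~ d.
  move=> J NJ wJ; have : xs x0 J != d by apply/eqP => hd; apply: hn; exists J; split.
  by case: (xs x0 J); case: (d).
have [B hB] := bound_ai_all _ hw wz.
pose K := kb w B.+1.
have hK y : K (alpha y) = if w (alpha y) then false else o y (+) K y := K_rec _ _ hB y.
have lK : lconst K by apply: lconst_kb.
pose U x := w x && (o (alphai x) (+) K (alphai x)).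
have lU : lconst U.
  exact: (lconst2 andb hw (lconst2 addb (lconst_comp lo cai) (lconst_comp lK cai))).
have [z Uz] : exists z, U z.
  apply: contrapT => nU; apply: nop.
  exists (fun x => K (alpha x)); split; first exact: (lconst_comp lK ca).
  move=> x; rewrite aiK hK.
  have : ~ U (alpha x) by move=> h; apply: nU; exists (alpha x).
  rewrite /U aK; case: (w (alpha x)) => /=.
    by case: (o x); case: (K x) => //= h; exfalso; apply: h.
  by move=> _; rewrite -addbA addbb addbF.
have [Bu' hBu'] := bound_ai_all _ lU (ex_intro _ z Uz).
have [k' _ hk'] := hBu' (iter N alphai x0).
rewrite -iterD in hk'.
move: hk'; rewrite /U => /andP [wJ hJ].
have NJ : (N <= k' + N)%N by lia.
have [b [bB hjb vb]] := first_visit _ _ _ (hB (iter (k' + N).+1 alphai x0)).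
have bB1 : (b <= B.+1)%N by lia.
have eK : K (iter (k' + N).+1 alphai x0) = xs (iter (k' + N).+1 alphai x0) b :=
  kb_seg _ _ _ _ bB1 hjb vb.
rewrite -iterS eK in hJ.
have e1 := xs_add x0 (k' + N).+1 b.
have e2 : xs x0 (k' + N).+1 = xs x0 (k' + N) (+) o (iter (k' + N).+1 alphai x0) by [].
rewrite e2 (H _ NJ wJ) in e1.
rewrite -addbA hJ addbT negbK in e1.
have wb : w (iter ((k' + N).+1 + b) alphai x0) by rewrite addnC iterD.
have NJ2 : (N <= (k' + N).+1 + b)%N by lia.
have := H _ NJ2 wb; rewrite e1.
by case: (d).
Qed.

Lemma xs_fwd y k : xs (iter k alpha y) k = fxs y k.
Proof.
elim: k => [|k IH] //.
by rewrite xs_shift iterS aK IH /= addbC.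
Qed.

Lemma multi x0 (d : bool) : forall (k : nat) (w : X -> bool), lconst w -> (exists z, w z) ->
  exists u g ns nt, good x0 (k%:Z * (-1) ^+ d) u g ns nt /\ (forall x, u x -> w x).
Proof.
elim=> [|k IH] w hw wz.
  exists (fun _ => false), (fun _ => 0), (fun _ => 0%N), (fun _ => 0%N); split => //.
  rewrite mul0r; exact: good0.
have [J [_ wJ xJ]] := inf_visits x0 w d hw wz 0.
have [J' [JJ' wJ' _]] := inf_visits x0 w d hw wz J.+1.
pose q j := if (j < J)%N then iter j alphai x0 else iter J' alphai x0.
have hq : forall j, (j < J.+1)%N -> q j <> iter J alphai x0.
  move=> j jJ; rewrite /q; case: ifP => h e; move/iter_ai_inj: e => e.
    by rewrite e ltnn in h.
  by rewrite e ltnn in JJ'.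
have [s [ls sJ hs]] := sep_pts (iter J alphai x0) q J.+1 hq.
pose v y := w y && s y.
have lv : lconst v by exact: (lconst2 andb hw ls).
have hvJ : forall j, (j < J)%N -> ~~ v (iter j alphai x0).
  move=> j jJ; have := hs j (ltnW jJ); rewrite /q jJ /v => /negbTE ->; by rewrite andbF.
have nvJ' : ~~ v (iter J' alphai x0).
  have := hs J (ltnSn J); rewrite /q ltnn /v => /negbTE ->; by rewrite andbF.
have vJ : v (iter J alphai x0) by rewrite /v wJ sJ.
have [u1 [g1 [ns1 [nt1 [G1 s1]]]]] := single x0 v d lv (ex_intro _ J (And3 hvJ vJ xJ)).
pose w' y := w y && ~~ v y.
have lw' : lconst w' by exact: (lconst2 (fun a b => a && ~~ b) hw lv).
have w'J' : w' (iter J' alphai x0) by rewrite /w' wJ' nvJ'.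
have [u2 [g2 [ns2 [nt2 [G2 s2]]]]] := IH w' lw' (ex_intro (fun z => w' z) _ w'J').
have dj : forall x, ~~ (u1 x && u2 x).
  move=> x; apply/negP => /andP [/s1 h1 /s2]; by rewrite /w' h1 andbF.
have G := @good_add _ _ _ _ _ _ _ _ _ _ _ G1 G2 dj.
exists (fun x => u1 x || u2 x), (fun x => g1 x + g2 x),
  (fun x => ns1 x + ns2 x)%N, (fun x => nt1 x + nt2 x)%N; split.
  by rewrite -addn1 PoszD mulrDl mul1r addrC.
move=> x /orP [/s1 | /s2]; first by rewrite /v => /andP [].
by rewrite /w' => /andP [].
Qed.
End Dyn.

Lemma iter_astar (R : realType) (alphai : X -> X) (phi : X -> R * R -> R * R) k (g : X -> int) x :
  iter k (astar alphai phi) g x = (-1) ^+ (xs alphai (o_phi phi) x k) * g (iter k alphai x).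
Proof.
elim: k x => [|k IH] x; first by rewrite /= expr0 mul1r.
rewrite (iterS k (astar alphai phi)) {1}/astar IH xs_shift signr_addb mulrA -iterSr.
by [].
Qed.

Lemma iter_astar_inv0 (R : realType) (alpha : X -> X) (phi : X -> R * R -> R * R) n (h : X -> int) :
  (forall y, h y = 0) -> forall x, iter n (astar_inv alpha phi) h x = 0.
Proof.
move=> h0; elim: n => [|n IH] x /=; first exact: h0.
by rewrite /astar_inv IH mulr0.
Qed.

Lemma SS (R : realType) (alpha alphai : X -> X) (phi : X -> R * R -> R * R) x0 c u g ns nt :
  cancel alpha alphai -> cancel alphai alpha ->
  good alpha alphai (o_phi phi) x0 c u g ns nt ->
  forall x, sigma_star alpha alphai phi (fun y => Posz (ns y)) (ind [set y | u y]) x =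
    - ind [set y | u y] x.
Proof.
move=> aK aiK G x.
have indE y : ind [set y | u y] y = (u y)%:Z by rewrite /ind asboolb.
pose y0 := tau_of alphai nt x.
pose k0 := ns y0.
have xe : iter k0 alpha y0 = x := gst G x.
have ye : iter k0 alphai x = y0 by rewrite -xe (@iter_gf alpha alphai aK k0 k0 y0 (leqnn _)) subnn.
pose F k := astar_pow alpha alphai phi k (fun y => ind [set y | u y] y * (Posz (ns y) == k)%:Z) x.
have F0 : forall k, k <> Posz k0 -> F k = 0.
  case=> [j|j] hj; rewrite /F /astar_pow.
    rewrite iter_astar.
    have [e|ne] := eqVneq (ns (iter j alphai x)) j; last first.
      have -> : (Posz (ns (iter j alphai x)) == Posz j) = false.
        by apply/eqP => -[e]; rewrite e eqxx in ne.
      by rewrite mulr0 mulr0.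
    case hu : (u (iter j alphai x)); last by rewrite indE hu mul0r mulr0.
    exfalso; apply: hj.
    have hs : sig_of alpha ns (iter j alphai x) = x.
      by rewrite /sig_of e (@iter_gf alphai alpha aiK j j x (leqnn _)) subnn.
    have : tau_of alphai nt x = iter j alphai x by rewrite -{1}hs (gts G).
    by move=> ey; rewrite /k0 /y0 ey e.
  by apply: iter_astar_inv0 => y; rewrite mulr0.
have sumE : sigma_star alpha alphai phi (fun y => Posz (ns y)) (ind [set y | u y]) x = F (Posz k0).
  have -> : F (Posz k0) = \sum_(k \in [set Posz k0]) F k by rewrite fsbig_set1.
  rewrite (fsbig_widen [set Posz k0] [set: int] F) //.
  by move=> k [_ hk]; apply: F0 => e; apply: hk; rewrite e.
rewrite sumE /F /astar_pow iter_astar ye eqxx mulr1.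
have xsv : xs alphai (o_phi phi) x k0 = fxs alpha (o_phi phi) y0 k0.
  by rewrite -(xs_fwd _ _ _ aK) xe.
case ux : (u x).
  have [_ uy _] := gin G x ux.
  have [_ _ fy] := gin G y0 uy.
  by rewrite !indE ux uy xsv fy expr1 mulr1.
case uy : (u y0).
  have [hs _ _] := gin G y0 uy.
  by move: hs; rewrite /sig_of -/k0 xe ux.
by rewrite !indE ux uy mulr0 oppr0.
Qed.

Theorem lemma6p3 (R : realType) (alpha alphai : X -> X)
  (phi : X -> R * R -> R * R) :
  minimal_homeo alpha -> cancel alpha alphai -> cancel alphai alpha ->
  (forall x, circle_isom (phi x)) ->
  {within [set: X] `*` circle R, continuous (fun z : X * (R * R) => phi z.1 z.2)} ->
  skew_minimal alpha phi ->
  ~ orientation_preserving alphai phi ->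
  forall (x0 : X) (m : int) (O : set X), clopen O -> O !=set0 ->
  exists U : set X, [/\ clopen U, U `<=` O,
    K1_equiv alphai phi x0 (ind U) (fun x => m * h_phi alphai phi x) &
    exists (sigma : X -> X) (n : X -> int),
      [/\ in_full_group alpha alphai sigma n,
          forall x, ~ U x -> sigma x = x &
          forall x, sigma_star alpha alphai phi n (ind U) x = - ind U x]].
Proof.
move=> [[ca [g0 [ag0 g0a cg0]]] hmin] aK aiK hi hc _ nop x0 m O cO [z Oz].
have eai : alphai = g0.
  by apply: funext => x; rewrite -{1}(g0a x) aK.
have cai : continuous alphai by rewrite eai.
have lo := o_lconst _ _ hi hc.
pose w x := `[< O x >].
have lw : lconst w := clopen_lconst cO.
have wz : exists z, w z by exists z; rewrite /w asboolT.
have [u [g [ns [nt [G sub]]]]] :=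
  multi _ _ _ aK aiK ca cai hmin lo nop x0 (m < 0) `|m|%N w lw wz.
have em : (Posz (absz m)) * (-1) ^+ (m < 0)%R = m by rewrite mulrC -intEsign.
rewrite em in G.
exists [set x | u x]; split.
- exact: lconst_clopen (gu G).
- by move=> x ux; have := sub x ux; rewrite /w => /asboolP.
- exists g; split; [exact: gg G | exact: gx0 G |].
  move=> x; rewrite /ind asboolb /h_phi /astar.
  exact: gK1 G x.
- exists (sig_of alpha ns), (fun x => Posz (ns x)); split.
  + split; [|split].
    * split; first exact: (@continuous_lconst_sel _ _ ns (fun k => iter k alpha) (gns G) (fun k => @continuous_iter _ alpha k ca)).
      exists (tau_of alphai nt); split; [exact: gts G | exact: gst G |].
      exact: (@continuous_lconst_sel _ _ nt (fun k => iter k alphai) (gnt G) (fun k => @continuous_iter _ alphai k cai)).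
    * exact: (lconst1 Posz (gns G)).
    * by [].
  + move=> x nux; have /(gout G) [e _] : ~~ u x by apply/negP.
    by rewrite /sig_of e.
  + move=> x; exact: (SS _ _ _ _ _ _ _ _ _ _ aK aiK G x).
Qed.
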